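(* Let $n\ge2$, $N\ge1$, $\Omega\subset\mathbb R^n$ open. Let $a:[0,\infty)\to[0,\infty)$ be of the form $a(t)=\widehat a(t^2)$ for some $\widehat a\in C^1([0,\infty))$, with $a(t)>0$ for $t>0$, and assume $i_a>-\tfrac12$. Then there exists a positive constant $C=C(n,N,i_a)$ such that, for every $\mathbf u=(u^1,\dots,u^N)\in C^3(\Omega,\mathbb R^N)$, $$\big|\mathrm{\mathbf{div}}(a(|\nabla\mathbf u|)\nabla\mathbf u)\big|^2\ge\sum_{j=1}^n\big(a(|\nabla\mathbf u|)^2\,\mathbf u_{x_j}\cdot\Delta\mathbf u\big)_{x_j}-\sum_{i=1}^n\Big(a(|\nabla\mathbf u|)^2\sum_{j=1}^n\mathbf u_{x_j}\cdot\mathbf u_{x_ix_j}\Big)_{x_i}+C\,a(|\nabla\mathbf u|)^2|\nabla^2\mathbf u|^2\quad\text{in }\Omega.$$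
   Context: $i_a=\inf_{t>0}\frac{ta'(t)}{a(t)}$. The dot denotes the scalar product in $\mathbb R^N$, and $|\nabla^2\mathbf u|=\big(\sum_{\alpha=1}^N\sum_{i,j=1}^n(u^\alpha_{x_ix_j})^2\big)^{1/2}$. *)

(* Defs.v *)
From HB Require Import structures.
From mathcomp Require Import all_boot all_order all_algebra.
From mathcomp Require Import all_classical all_reals all_analysis.
Set Implicit Arguments. Unset Strict Implicit. Unset Printing Implicit Defensive.
Import Order.TTheory GRing.Theory Num.Theory.
Import numFieldNormedType.Exports.
Local Open Scope classical_set_scope.
Local Open Scope ring_scope.

Section Defs.
Variables (R : realType) (n : nat).

Definition pd (i : 'I_n) (f : 'rV[R]_n -> R) : 'rV[R]_n -> R :=
  fun x => 'D_(delta_mx 0 i) f x.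

Fixpoint Ck (k : nat) (O : set 'rV[R]_n) (f : 'rV[R]_n -> R) : Prop :=
  match k with
  | 0 => forall x, O x -> {for x, continuous f}
  | k'.+1 => (forall (i : 'I_n) x, O x -> derivable f x (delta_mx 0 i)) /\
             Ck k' O f /\ (forall i : 'I_n, Ck k' O (pd i f))
  end.

Definition lap (f : 'rV[R]_n -> R) : 'rV[R]_n -> R :=
  fun x => \sum_(i < n) pd i (pd i f) x.

Variable N : nat.
Definition gradnorm (u : 'I_N -> 'rV[R]_n -> R) : 'rV[R]_n -> R :=
  fun x => Num.sqrt (\sum_(al < N) \sum_(i < n) (pd i (u al) x) ^+ 2).

Definition hess2 (u : 'I_N -> 'rV[R]_n -> R) : 'rV[R]_n -> R :=
  fun x => \sum_(al < N) \sum_(i < n) \sum_(j < n) (pd j (pd i (u al)) x) ^+ 2.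
End Defs.

Definition C1_halfline (R : realType) (f : R -> R) : Prop :=
  exists g : R -> R,
    (forall t : R, 0 <= t ->
       (fun s => (s - t)^-1 * (f s - f t)) @ within [set s | 0 <= s /\ s != t] (nbhs t)
         --> g t) /\
    {within `[0, +oo[, continuous g}.

(* Main.v *)
Require Import Defs.
From HB Require Import structures.
From mathcomp Require Import all_boot all_order all_algebra.
From mathcomp Require Import all_classical all_reals all_analysis.
From mathcomp Require Import ring lra.
Import Order.TTheory GRing.Theory Num.Theory.
Import numFieldNormedType.Exports.
Local Open Scope classical_set_scope.
Local Open Scope ring_scope.


Lemma isdM {R : realType} {V : normedModType R} {f g : V -> R} {x v df dg} :
  is_derive x v f df -> is_derive x v g dg ->
  is_derive x v (fun y => f y * g y) (f x * dg + g x * df).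
Proof. move=> hf hg; exact: (is_deriveM hf hg). Qed.

Lemma isdS {R : realType} {V : normedModType R} {m} {h : 'I_m -> V -> R} {x v dh} :
  (forall a, is_derive x v (h a) (dh a)) ->
  is_derive x v (fun y => \sum_(a < m) h a y) (\sum_(a < m) dh a).
Proof. move=> H; rewrite -fct_sumE; exact: is_derive_sum. Qed.

Lemma isdB {R : realType} {V : normedModType R} {f g : V -> R} {x v df dg} :
  is_derive x v f df -> is_derive x v g dg ->
  is_derive x v (fun y => f y - g y) (df - dg).
Proof. move=> hf hg; exact: (is_deriveB hf hg). Qed.

Lemma dval {R : numFieldType} {V W : normedModType R} {f : V -> W} {a v df} :
  is_derive a v f df -> 'D_v f a = df.
Proof. by case. Qed.

Lemma dable {R : numFieldType} {V W : normedModType R} {f : V -> W} {a v df} :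
  is_derive a v f df -> derivable f a v.
Proof. by case. Qed.

Section Chain.
Variables (R : realType).

Lemma chain_ahat (V : normedModType R) (ahat g : R -> R) (S : V -> R) x v :
 (forall t, 0 <= t -> (fun s => (s - t)^-1 * (ahat s - ahat t)) @
     within [set s | 0 <= s /\ s != t] (nbhs t) --> g t) ->
 (forall y, 0 <= S y) -> derivable S x v ->
 is_derive x v (fun y => ahat (S y)) (g (S x) * 'D_v S x).
Proof.
move=> hg S0 dS.
set t := S x.
pose phi s := if s == t then g t else (s - t)^-1 * (ahat s - ahat t).
have key s : ahat s - ahat t = phi s * (s - t).
  rewrite /phi; case: eqP => [->|/eqP st]; first by rewrite !subrr mulr0.
  by rewrite mulrC mulrA mulfV ?mul1r // subr_eq0.
have E : (fun h : R => h^-1 *: ((fun y => ahat (S y)) (h *: v + x) - ahat (S x))) =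
   (fun h => phi (S (h *: v + x)) * (h^-1 *: (S (h *: v + x) - S x))).
  apply/funext => h /=; rewrite key.
  by rewrite -[_ *: (_ * _)]/(_ * (_ * _)) -[h^-1 *: (_ - _)]/(h^-1 * _) mulrCA.
have hc : (fun h : R => S (h *: v + x)) @ 0^' --> t.
  suff : {for 0, continuous (fun h : R => S (h *: v + x))}.
    by move=> /continuous_withinNx; rewrite scale0r add0r.
  exact/differentiable_continuous/derivable1_diffP/(derivable1P _ _ _).1.
have hphi : (fun h : R => phi (S (h *: v + x))) @ 0^' --> g t.
  apply/cvgrPdist_lt => e e0.
  have := hg t (S0 x); move/cvgrPdist_lt => /(_ e e0) Hn.
  have Hn' : \forall s \near t, 0 <= s -> `|g t - phi s| < e.
    have Hn2 : \forall s \near t, (0 <= s /\ s != t) -> `|g t - (s - t)^-1 * (ahat s - ahat t)| < e := Hn.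
    move: Hn2; apply: filterS => s Hs s0.
    rewrite /phi; case: eqP => [_|/eqP st]; first by rewrite subrr normr0.
    by apply: Hs; split.
  have H2 : \forall h \near 0^', 0 <= S (h *: v + x) -> `|g t - phi (S (h *: v + x))| < e.
    exact: hc Hn'.
  by apply: filterS H2 => h /= H; exact: H.
have hcv : (fun h : R => h^-1 *: ((fun y => ahat (S y)) (h *: v + x) - ahat (S x))) @ 0^'
     --> g t * 'D_v S x.
  rewrite E; apply: cvgM => //; exact: dS.
apply: DeriveDef; first by apply/cvg_ex; exists (g t * 'D_v S x).
exact: cvg_lim hcv.
Qed.
End Chain.

Lemma ia_bound (R : realType) (a ahat g : R -> R) (ia t : R) :
  (forall t, 0 <= t -> (fun s => (s - t)^-1 * (ahat s - ahat t)) @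
     within [set s | 0 <= s /\ s != t] (nbhs t) --> g t) ->
  (forall t, 0 <= t -> a t = ahat (t ^+ 2)) ->
  (forall t, 0 < t -> 0 < a t) ->
  ereal_inf [set ((t * derive1 a t / a t)%:E) | t in `]0, +oo[%classic] = ia%:E ->
  0 < t -> ia * a t <= 2 * t ^+ 2 * g (t ^+ 2).
Proof.
move=> hg ha apos hinf t0.
have iS : is_derive t (1:R) (fun s : R => s * s) (t * 1 + t * 1).
  exact: (is_deriveM (is_derive_id t 1) (is_derive_id t 1)).
have dS : derivable (fun s : R => s ^+ 2) t 1 by case: iS.
have := @chain_ahat R R ahat g (fun s : R => s ^+ 2) t 1 hg (fun y => sqr_ge0 y) dS.
move=> ic.
have hd : derive1 a t = g (t ^+ 2) * (t * 1 + t * 1).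
  rewrite derive1E (@near_eq_derive R R R a (fun s => ahat (s ^+ 2)) t 1).
    rewrite (dval ic).
    by rewrite (dval iS).
  near=> s; apply: ha; apply: ltW; near: s; exact: lt_nbhsr.
have := ereal_inf_lbound (S := [set ((t * derive1 a t / a t)%:E) | t in `]0, +oo[%classic]).
move=> /(_ ((t * derive1 a t / a t)%:E)); rewrite hinf lee_fin => H.
have {H} : ia <= t * derive1 a t / a t.
  by apply: H; exists t => //=; rewrite in_itv /= t0.
rewrite ler_pdivlMr ?apos // hd => H; apply: le_trans H _; rewrite le_eqVlt; apply/orP; left; apply/eqP; ring.
Unshelve. all: by end_near.
Qed.

Lemma arith3 {R : realFieldType} {a b c : R} :
  `|a - b| <= `|a - c| + `|c - b| -> `|a - c| < `|a - b| / 3 -> `|c - b| < `|a - b| / 3 -> False.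
Proof. move=> h1 h2 h3; have := normr_ge0 (a - b); lra. Qed.

Section Sch.
Variables (R : realType) (n : nat).
Local Notation V := 'rV[R]_n.
Lemma line_derive (f : V -> R) (v p : V) (s0 : R) :
  derivable f (s0 *: v + p) v ->
  is_derive s0 1 (fun s : R => f (s *: v + p)) ('D_v f (s0 *: v + p)).
Proof.
have E : (fun h : R => h^-1 *: ((fun s : R => f (s *: v + p)) (h *: 1 + s0) - (fun s : R => f (s *: v + p)) s0)) =
   (fun h => h^-1 *: (f (h *: v + (s0 *: v + p)) - f (s0 *: v + p))).
  apply/funext => h /=; congr (_ *: (f _ - _)).
  by rewrite -[h *: 1]/(h * 1) mulr1 scalerDl addrA.
move=> df; apply: DeriveDef; first by rewrite /derivable E.
by rewrite /derive E.
Qed.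

Lemma norm_delta (i : 'I_n) : `|delta_mx 0 i : V| <= 1.
Proof.
rewrite [leLHS]/Num.norm /= mx_normrE; apply: bigmax_le => // -[a b] _ /=.
rewrite mxE; case: (_ && _); by rewrite ?normr1 ?normr0.
Qed.

Lemma norm_sq (i j : 'I_n) (s t : R) :
  `|s *: (delta_mx 0 i : V) + t *: delta_mx 0 j| <= `|s| + `|t|.
Proof.
apply: le_trans (ler_normD _ _) _; rewrite !normrZ.
by apply: lerD; rewrite -[leRHS]mulr1 ler_wpM2l // norm_delta.
Qed.

Lemma mixed_mvt (f : V -> R) (i j : 'I_n) (x : V) (h : R) :
  0 < h ->
  (forall s t, 0 <= s <= h -> 0 <= t <= h ->
     derivable f (s *: delta_mx 0 i + (t *: delta_mx 0 j + x)) (delta_mx 0 i) /\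
     derivable (pd i f) (s *: delta_mx 0 i + (t *: delta_mx 0 j + x)) (delta_mx 0 j)) ->
  exists s t, [/\ 0 <= s <= h, 0 <= t <= h &
    f (h *: delta_mx 0 i + (h *: delta_mx 0 j + x)) - f (h *: delta_mx 0 i + x)
    - f (h *: delta_mx 0 j + x) + f x
    = h ^+ 2 * pd j (pd i f) (s *: delta_mx 0 i + (t *: delta_mx 0 j + x))].
Proof.
move=> h0 hd.
set ei := delta_mx 0 i : V; set ej := delta_mx 0 j : V.
have hh : 0 <= h <= h by apply/andP; split => //; apply: ltW.
have h00 : (0:R) <= 0 <= h by rewrite lexx (ltW h0).
have hx s : s *: ei + x = s *: ei + (0 *: ej + x) by rewrite scale0r add0r.
have isd s : 0 <= s <= h -> is_derive s 1
    (fun s => f (s *: ei + (h *: ej + x)) - f (s *: ei + x))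
    (pd i f (s *: ei + (h *: ej + x)) - pd i f (s *: ei + x)).
  move=> sh; apply: isdB.
    by apply: line_derive; case: (hd s h sh hh).
  have -> : (fun s => f (s *: ei + x)) = (fun s => f (s *: ei + (0 *: ej + x))).
    by apply/funext => r; rewrite -hx.
  by rewrite (hx s); apply: line_derive; case: (hd s 0 sh h00).
have [xi xiI Exi] : exists2 xi, xi \in `]0, h[ &
   (fun s => f (s *: ei + (h *: ej + x)) - f (s *: ei + x)) h
 - (fun s => f (s *: ei + (h *: ej + x)) - f (s *: ei + x)) 0
 = (pd i f (xi *: ei + (h *: ej + x)) - pd i f (xi *: ei + x)) * (h - 0).
  apply: (@MVT R (fun s => f (s *: ei + (h *: ej + x)) - f (s *: ei + x))
    (fun xi => pd i f (xi *: ei + (h *: ej + x)) - pd i f (xi *: ei + x)) 0 h h0).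
    move=> s; rewrite in_itv /= => /andP[s0 sh].
    by apply: isd; rewrite (ltW s0) (ltW sh).
  apply: derivable_within_continuous => s.
  by rewrite in_itv /= => sh; have [] := isd s sh.
have xih : 0 <= xi <= h.
  by move: xiI; rewrite in_itv /= => /andP[a b]; rewrite (ltW a) (ltW b).
have hy t : t *: ej + (xi *: ei + x) = xi *: ei + (t *: ej + x) by rewrite addrCA.
have isd2 t : 0 <= t <= h -> is_derive t 1 (fun t => pd i f (t *: ej + (xi *: ei + x)))
     (pd j (pd i f) (xi *: ei + (t *: ej + x))).
  by move=> th; rewrite -hy; apply: line_derive; rewrite hy; case: (hd xi t xih th).
have [eta etaI Eeta] : exists2 eta, eta \in `]0, h[ &
   (fun t => pd i f (t *: ej + (xi *: ei + x))) h - (fun t => pd i f (t *: ej + (xi *: ei + x))) 0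
    = pd j (pd i f) (xi *: ei + (eta *: ej + x)) * (h - 0).
  apply: (@MVT R (fun t => pd i f (t *: ej + (xi *: ei + x)))
    (fun eta => pd j (pd i f) (xi *: ei + (eta *: ej + x))) 0 h h0).
    move=> s; rewrite in_itv /= => /andP[s0 sh].
    by apply: isd2; rewrite (ltW s0) (ltW sh).
  apply: derivable_within_continuous => s.
  by rewrite in_itv /= => sh; have [] := isd2 s sh.
exists xi, eta; split => //.
  by move: etaI; rewrite in_itv /= => /andP[a b]; rewrite (ltW a) (ltW b).
move: Exi Eeta => /=; rewrite !scale0r !add0r hy subr0 => E1 E2.
rewrite [LHS](_ : _ = f (h *: ei + (h *: ej + x)) - f (h *: ei + x) - (f (h *: ej + x) - f x)); last first.
  by ring.
by rewrite E1 E2; ring.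
Qed.

Lemma schwarz (O : set V) (f : V -> R) (i j : 'I_n) (x : V) :
  open O -> O x -> Ck 2 O f -> pd j (pd i f) x = pd i (pd j f) x.
Proof.
move=> oO Ox [d1 [_ hi]].
have dd k l y : O y -> derivable (pd k f) y (delta_mx 0 l) by move=> Oy; exact: (hi k).1.
have cc k l : {for x, continuous (pd l (pd k f))} by exact: (hi k).2.2 l x Ox.
set a := pd j (pd i f) x; set b := pd i (pd j f) x.
have [//|neq] := eqVneq a b; exfalso.
set eps := `|a - b| / 3.
have eps0 : 0 < eps by rewrite divr_gt0 // normr_gt0 subr_eq0.
have N : \forall y \near x, O y /\ `|a - pd j (pd i f) y| < eps /\ `|b - pd i (pd j f) y| < eps.
  have N1 : \forall y \near x, `|a - pd j (pd i f) y| < eps.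
    by move/cvgrPdist_lt: (cc i j); apply.
  have N2 : \forall y \near x, `|b - pd i (pd j f) y| < eps.
    by move/cvgrPdist_lt: (cc j i); apply.
  have N0 : \forall y \near x, O y by apply: open_nbhs_nbhs; split.
  exact: filterI N0 (filterI N1 N2).
move/nbhs_ballP: N => [del /= del0 Hdel].
set ei := delta_mx 0 i : V; set ej := delta_mx 0 j : V.
set h := del / 3.
have h0 : 0 < h by rewrite divr_gt0.
have inS s t k l : 0 <= s <= h -> 0 <= t <= h ->
    ball x del (s *: delta_mx 0 k + (t *: delta_mx 0 l + x)).
  move=> /andP[s0 sh] /andP[t0 th].
  rewrite -ball_normE /= addrA opprD addrCA subrr addr0 normrN.
  apply: le_lt_trans (norm_sq _ _ _ _) _.
  rewrite (ger0_norm s0) (ger0_norm t0).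
  have : s + t <= h + h by apply: lerD.
  rewrite /h => H; apply: le_lt_trans H _; move: del0 => /= d0; lra.
have [s1 [t1 [s1h t1h E1]]] : exists s t, [/\ 0 <= s <= h, 0 <= t <= h &
    f (h *: ei + (h *: ej + x)) - f (h *: ei + x) - f (h *: ej + x) + f x
    = h ^+ 2 * pd j (pd i f) (s *: ei + (t *: ej + x))].
  apply: mixed_mvt => // s t sh th.
  have [Oy _] := Hdel _ (inS s t i j sh th).
  by split; [exact: d1 | exact: dd].
have [s2 [t2 [s2h t2h E2]]] : exists s t, [/\ 0 <= s <= h, 0 <= t <= h &
    f (h *: ej + (h *: ei + x)) - f (h *: ej + x) - f (h *: ei + x) + f x
    = h ^+ 2 * pd i (pd j f) (s *: ej + (t *: ei + x))].
  apply: mixed_mvt => // s t sh th.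
  have [Oy _] := Hdel _ (inS s t j i sh th).
  by split; [exact: d1 | exact: dd].
have EFG : pd j (pd i f) (s1 *: ei + (t1 *: ej + x)) = pd i (pd j f) (s2 *: ej + (t2 *: ei + x)).
  have hn : h ^+ 2 != 0 by rewrite expf_neq0 // gt_eqF.
  have EE : h ^+ 2 * pd j (pd i f) (s1 *: ei + (t1 *: ej + x)) = h ^+ 2 * pd i (pd j f) (s2 *: ej + (t2 *: ei + x)).
    apply: (etrans (esym E1)); apply: (etrans _ E2). rewrite [h *: ej + (h *: ei + x)]addrCA. 
    set A1 := f _; set A2 := f (h *: ei + x); set A3 := f (h *: ej + x). ring.
  by rewrite -[LHS](mulKf hn) EE mulKf.
have [_ [H1 _]] := Hdel _ (inS s1 t1 i j s1h t1h).
have [_ [_ H2]] := Hdel _ (inS s2 t2 j i s2h t2h).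
rewrite -EFG in H2.
have H3 := ler_distD (pd j (pd i f) (s1 *: ei + (t1 *: ej + x))) a b.
rewrite distrC in H2.
exact: (arith3 H3 H1 H2).
Qed.
End Sch.

Section Alg.
Variable R : realFieldType.

Lemma CS (I : finType) (a b : I -> R) :
  (\sum_i a i * b i) ^+ 2 <= (\sum_i a i ^+ 2) * (\sum_i b i ^+ 2).
Proof.
set Sa := \sum_i a i ^+ 2; set Sb := \sum_i b i ^+ 2; set Sab := \sum_i a i * b i.
have Sa0 : 0 <= Sa by apply: sumr_ge0 => i _; exact: sqr_ge0.
have [Sa00|Sapos] := eqVneq Sa 0.
  have a0 i : a i = 0.
    have := Sa00; rewrite /Sa => /eqP; rewrite psumr_eq0 => [/allP H|i' _]; last exact: sqr_ge0.
    by have := H i (mem_index_enum i); rewrite /= sqrf_eq0 => /eqP.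
  have -> : Sab = 0 by rewrite /Sab big1 // => i _; rewrite a0 mul0r.
  by rewrite Sa00 expr0n /= mul0r.
have Sagt : 0 < Sa by rewrite lt_def Sapos Sa0.
have H0 : 0 <= \sum_i (Sa * b i - Sab * a i) ^+ 2 by apply: sumr_ge0 => i _; exact: sqr_ge0.
have E : \sum_i (Sa * b i - Sab * a i) ^+ 2 = Sa ^+ 2 * Sb - 2 * Sa * Sab * Sab + Sab ^+ 2 * Sa.
  rewrite (eq_bigr (fun i => Sa ^+ 2 * b i ^+ 2 - 2 * Sa * Sab * (a i * b i) + Sab ^+ 2 * a i ^+ 2)); last first.
    by move=> i _; ring.
  by rewrite big_split /= sumrB -!mulr_sumr.
rewrite E in H0.
have : 0 <= Sa * (Sa * Sb - Sab ^+ 2) by rewrite mulrBr; move: H0; rewrite !expr2; lra.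
by rewrite pmulr_rge0 // subr_ge0.
Qed.

Lemma exch3 (I J K : finType) (F : I -> J -> K -> R) :
  \sum_i \sum_j \sum_k F i j k = \sum_k \sum_i \sum_j F i j k.
Proof.
rewrite (eq_bigr (fun i => \sum_k \sum_j F i j k)); last by move=> i _; rewrite exchange_big.
by rewrite exchange_big.
Qed.

Lemma exch3b (I J K : finType) (F : I -> J -> K -> R) :
  \sum_i \sum_j \sum_k F i j k = \sum_j \sum_k \sum_i F i j k.
Proof.
rewrite exchange_big; apply: eq_bigr => j _; by rewrite exchange_big.
Qed.

Lemma alg (N n : nat) (U : 'I_N -> 'I_n -> R) (H : 'I_N -> 'I_n -> 'I_n -> R)
  (T : 'I_N -> 'I_n -> 'I_n -> 'I_n -> R) (dA : 'I_n -> R) (A G C ia : R) :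
 (forall al i j, H al i j = H al j i) ->
 (forall al i j, T al i j i = T al i i j) ->
 0 <= A -> C <= 1 -> C <= 1 + 2 * ia ->
 (0 < \sum_al \sum_i U al i ^+ 2 -> ia * A <= 2 * (\sum_al \sum_i U al i ^+ 2) * G) ->
 (forall k, dA k = 2 * G * \sum_al \sum_i U al i * H al i k) ->
 \sum_(j < n) (A ^+ 2 * (\sum_(al < N) (U al j * (\sum_(i < n) T al i i j)
        + (\sum_(i < n) H al i i) * H al j j))
      + (\sum_(al < N) U al j * (\sum_(i < n) H al i i)) * (2 * A * dA j))
 - \sum_(i < n) (A ^+ 2 * (\sum_(j < n) \sum_(al < N) (U al j * T al i j i + H al i j * H al j i))
      + (\sum_(j < n) \sum_(al < N) U al j * H al i j) * (2 * A * dA i))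
 + C * A ^+ 2 * (\sum_(al < N) \sum_(i < n) \sum_(j < n) H al i j ^+ 2)
 <= \sum_(al < N) (\sum_(i < n) (A * H al i i + U al i * dA i)) ^+ 2.
Proof.
move=> Hs Ts A0 C1 Cia hia hdA.
pose L al := \sum_(i < n) H al i i.
pose P al := \sum_(i < n) U al i * dA i.
pose X := \sum_(al < N) \sum_(j < n) U al j * \sum_(i < n) T al i i j.
pose HH := \sum_(al < N) \sum_(i < n) \sum_(j < n) H al i j ^+ 2.
pose W k := \sum_(al < N) \sum_(i < n) U al i * H al i k.
pose S := \sum_(al < N) \sum_(i < n) U al i ^+ 2.
have E1 : \sum_(al < N) (\sum_(i < n) (A * H al i i + U al i * dA i)) ^+ 2
   = A ^+ 2 * \sum_al L al ^+ 2 + 2 * A * \sum_al L al * P al + \sum_al P al ^+ 2.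
  rewrite (eq_bigr (fun al => A ^+ 2 * L al ^+ 2 + 2 * A * (L al * P al) + P al ^+ 2)).
    by rewrite !big_split /= -!mulr_sumr.
  move=> al _; rewrite big_split /= -mulr_sumr -/(L al) -/(P al); ring.
have E2 : \sum_(j < n) (A ^+ 2 * (\sum_(al < N) (U al j * (\sum_(i < n) T al i i j)
        + (\sum_(i < n) H al i i) * H al j j))
      + (\sum_(al < N) U al j * (\sum_(i < n) H al i i)) * (2 * A * dA j))
   = A ^+ 2 * X + A ^+ 2 * \sum_al L al ^+ 2 + 2 * A * \sum_al L al * P al.
  rewrite big_split /= -mulr_sumr.
  have -> : \sum_(j < n) \sum_(al < N) (U al j * (\sum_(i < n) T al i i j)
        + (\sum_(i < n) H al i i) * H al j j) = X + \sum_al L al ^+ 2.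
    rewrite (eq_bigr (fun j => \sum_(al < N) (U al j * (\sum_(i < n) T al i i j))
        + \sum_(al < N) (L al * H al j j))); last by move=> j _; rewrite big_split.
    rewrite big_split /= exchange_big /=; congr (_ + _).
    rewrite exchange_big; apply: eq_bigr => al _; by rewrite -mulr_sumr expr2.
  have -> : \sum_(j < n) (\sum_(al < N) U al j * (\sum_(i < n) H al i i)) * (2 * A * dA j)
      = 2 * A * \sum_al L al * P al.
    rewrite (eq_bigr (fun j => \sum_(al < N) 2 * A * (L al * (U al j * dA j)))); last first.
      by move=> j _; rewrite mulr_suml; apply: eq_bigr => al _; rewrite /L; ring.
    rewrite exchange_big /= (eq_bigr (fun al => 2 * A * (L al * P al))) -?mulr_sumr //.
    by move=> al _; rewrite -!mulr_sumr.
  by rewrite mulrDr.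
have E3 : \sum_(i < n) (A ^+ 2 * (\sum_(j < n) \sum_(al < N) (U al j * T al i j i + H al i j * H al j i))
      + (\sum_(j < n) \sum_(al < N) U al j * H al i j) * (2 * A * dA i))
   = A ^+ 2 * X + A ^+ 2 * HH + 2 * A * \sum_i W i * dA i.
  rewrite big_split /= -mulr_sumr.
  have -> : \sum_(i < n) \sum_(j < n) \sum_(al < N) (U al j * T al i j i + H al i j * H al j i)
      = X + HH.
    rewrite (eq_bigr (fun i => \sum_(j < n) \sum_(al < N) (U al j * T al i i j)
        + \sum_(j < n) \sum_(al < N) H al i j ^+ 2)); last first.
      move=> i _; rewrite -big_split; apply: eq_bigr => j _.
      by rewrite -big_split; apply: eq_bigr => al _; rewrite Ts -Hs expr2.
    rewrite big_split /=; congr (_ + _); rewrite exch3 //.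
    apply: eq_bigr => al _; rewrite exchange_big; apply: eq_bigr => j _.
    by rewrite mulr_sumr.
  have -> : \sum_(i < n) (\sum_(j < n) \sum_(al < N) U al j * H al i j) * (2 * A * dA i)
      = 2 * A * \sum_i W i * dA i.
    rewrite mulr_sumr; apply: eq_bigr => i _.
    rewrite /W exchange_big /=.
    rewrite (eq_bigr (fun al => \sum_(i0 < n) U al i0 * H al i0 i)); last first.
      by move=> al _; apply: eq_bigr => j _; rewrite Hs.
    ring.
  by rewrite mulrDr.
rewrite E1 E2 E3.
have SW : \sum_i W i * dA i = 2 * G * \sum_i W i ^+ 2.
  rewrite mulr_sumr; apply: eq_bigr => i _; rewrite hdA -/(W i); ring.
rewrite SW.
have CSb : \sum_i W i ^+ 2 <= S * HH.
  apply: le_trans (ler_sum _ (fun i _ => _ : W i ^+ 2 <= S * \sum_al \sum_j H al j i ^+ 2)) _.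
    move=> i _; rewrite /S /W !pair_bigA; exact: (CS _ (fun p => U p.1 p.2) (fun p => H p.1 p.2 i)).
  by rewrite -mulr_sumr exch3b.
have HH0 : 0 <= HH.
  by do 3!(apply: sumr_ge0 => ? _); exact: sqr_ge0.
have w0 : 0 <= \sum_i W i ^+ 2 by apply: sumr_ge0 => ? _; exact: sqr_ge0.
have S0 : 0 <= S by do 2!(apply: sumr_ge0 => ? _); exact: sqr_ge0.
have P0 : 0 <= \sum_al P al ^+ 2 by apply: sumr_ge0 => ? _; exact: sqr_ge0.
have AH0 : 0 <= A * HH by exact: mulr_ge0.
have key : 0 <= 4 * A * G * \sum_i W i ^+ 2 + (1 - C) * A ^+ 2 * HH.
  have k2 : 0 <= (1 - C) * A ^+ 2 * HH.
    by rewrite mulr_ge0 // mulr_ge0 ?sqr_ge0 // subr_ge0.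
  have [G0|G0] := leP 0 G.
    by apply: addr_ge0 => //; rewrite !mulr_ge0.
  have h1 : 4 * A * G * (S * HH) <= 4 * A * G * \sum_i W i ^+ 2.
    have hn : 4 * A * G <= 0 by apply: mulr_ge0_le0; [apply: mulr_ge0 | apply: ltW].
    exact: (ler_wnM2l hn CSb).
  have [S00|Spos] := eqVneq S 0.
    move: h1; rewrite S00 mul0r mulr0 => h1; lra.
  have Sgt : 0 < S by rewrite lt_def Spos S0.
  have h2 := hia Sgt.
  have h3 : 2 * (A * HH) * (ia * A) <= 2 * (A * HH) * (2 * S * G).
    by apply: ler_wpM2l => //; rewrite mulr_ge0.
  have h4 : 0 <= (1 + 2 * ia - C) * A ^+ 2 * HH.
    by rewrite mulr_ge0 // mulr_ge0 ?sqr_ge0 // subr_ge0.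
  move: h1 h3 h4; rewrite !expr2; lra.
rewrite -/HH; move: key P0; rewrite !expr2; lra.
Qed.
End Alg.

Theorem lemma3p3 (R : realType) (n N : nat) (hn : (2 <= n)%N) (hN : (1 <= N)%N)
  (ia : R) (hia : - (1 / 2) < ia) :
  exists C : R, 0 < C /\
  forall (O : set 'rV[R]_n) (a ahat : R -> R),
    open O ->
    C1_halfline ahat ->
    (forall t : R, 0 <= t -> a t = ahat (t ^+ 2)) ->
    0 <= a 0 ->
    (forall t : R, 0 < t -> 0 < a t) ->
    ereal_inf [set ((t * derive1 a t / a t)%:E) | t in `]0, +oo[%classic] = ia%:E ->
    forall u : 'I_N -> 'rV[R]_n -> R,
    (forall al, Ck 3 O (u al)) ->
    let A := fun y => a (gradnorm u y) in
    forall x, O x ->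
      \sum_(al < N) (\sum_(i < n) pd i (fun y => A y * pd i (u al) y) x) ^+ 2
      >= \sum_(j < n) pd j (fun y => A y ^+ 2 *
                              \sum_(al < N) pd j (u al) y * lap (u al) y) x
         - \sum_(i < n) pd i (fun y => A y ^+ 2 *
              \sum_(j < n) \sum_(al < N) pd j (u al) y * pd j (pd i (u al)) y) x
         + C * A x ^+ 2 * hess2 u x.
Proof.
exists (Num.min 1 (1 + 2 * ia)); split.
  rewrite lt_min; apply/andP; split; [exact: ltr01 | lra].
move=> O a ahat oO [g [hg _]] ha a0 apos hinf u hu A x Ox.
have C1 : Num.min 1 (1 + 2 * ia) <= 1 by rewrite ge_min lexx.
have Cia : Num.min 1 (1 + 2 * ia) <= 1 + 2 * ia by rewrite ge_min lexx orbT.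
have d2 al i j : derivable (pd i (u al)) x (delta_mx 0 j) := ((hu al).2.2 i).1 j x Ox.
have d3 al i j k : derivable (pd j (pd i (u al))) x (delta_mx 0 k) :=
  (((hu al).2.2 i).2.2 j).1 k x Ox.
have Hs al i j : pd j (pd i (u al)) x = pd i (pd j (u al)) x :=
  @schwarz R n O (u al) i j x oO Ox (hu al).2.1.
have Ts al i j : pd i (pd j (pd i (u al))) x = pd j (pd i (pd i (u al))) x :=
  @schwarz R n O (pd i (u al)) j i x oO Ox ((hu al).2.2 i).
pose Sf y := \sum_(al < N) \sum_(i < n) pd i (u al) y ^+ 2.
have Sf0 y : 0 <= Sf y.
  by apply: sumr_ge0 => al _; apply: sumr_ge0 => i _; exact: sqr_ge0.
have hA y : A y = ahat (Sf y).
  by rewrite /A /gradnorm ha ?sqrtr_ge0 // sqr_sqrtr //; exact: Sf0.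
have iU al j k : is_derive x (delta_mx 0 k) (pd j (u al)) (pd k (pd j (u al)) x) :=
  derivableP (d2 al j k).
have iS k : is_derive x (delta_mx 0 k) Sf (\sum_(al < N) \sum_(i < n)
    (pd i (u al) x * pd k (pd i (u al)) x + pd i (u al) x * pd k (pd i (u al)) x)).
  apply: isdS => al; apply: isdS => i; exact: isdM (iU al i k) (iU al i k).
pose G := g (Sf x).
pose dA k := G * 'D_(delta_mx 0 k) Sf x.
have iA k : is_derive x (delta_mx 0 k) A (dA k).
  have -> : A = (fun y => ahat (Sf y)) by apply/funext => y; exact: hA y.
  exact: chain_ahat hg Sf0 (dable (iS k)).
have hdA k : dA k = 2 * G * \sum_(al < N) \sum_(i < n) pd i (u al) x * pd k (pd i (u al)) x.
  rewrite /dA (dval (iS k)) [2 * G]mulrC -mulrA; congr (G * _).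
  rewrite mulr_sumr; apply: eq_bigr => al _; rewrite mulr_sumr; apply: eq_bigr => i _.
  ring.
have A0 : 0 <= A x.
  rewrite /A; have [->|gp] := eqVneq (gradnorm u x) 0 => //.
  by apply/ltW/apos; rewrite lt_def gp sqrtr_ge0.
have hia' : 0 < Sf x -> ia * A x <= 2 * Sf x * G.
  move=> Sp.
  have := @ia_bound R a ahat g ia (Num.sqrt (Sf x)) hg ha apos hinf.
  by rewrite sqrtr_gt0 sqr_sqrtr ?Sf0 //; apply.
have iA2 k : is_derive x (delta_mx 0 k) (fun y => A y ^+ 2) (A x * dA k + A x * dA k).
  exact: isdM (iA k) (iA k).
have L1 al i : pd i (fun y => A y * pd i (u al) y) x
    = A x * pd i (pd i (u al)) x + pd i (u al) x * dA i.
  exact: dval (isdM (iA i) (iU al i i)).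
have L2 j : pd j (fun y => A y ^+ 2 * \sum_(al < N) pd j (u al) y * lap (u al) y) x
  = A x ^+ 2 * (\sum_(al < N) (pd j (u al) x * (\sum_(i < n) pd j (pd i (pd i (u al))) x)
        + (\sum_(i < n) pd i (pd i (u al)) x) * pd j (pd j (u al)) x))
      + (\sum_(al < N) pd j (u al) x * (\sum_(i < n) pd i (pd i (u al)) x)) * (2 * A x * dA j).
  have iL al : is_derive x (delta_mx 0 j) (lap (u al))
      (\sum_(i < n) pd j (pd i (pd i (u al))) x).
    exact: isdS (fun i => derivableP (d3 al i i j)).
  have iF : is_derive x (delta_mx 0 j)
      (fun y => \sum_(al < N) pd j (u al) y * lap (u al) y)
      (\sum_(al < N) (pd j (u al) x * (\sum_(i < n) pd j (pd i (pd i (u al))) x)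
        + (\sum_(i < n) pd i (pd i (u al)) x) * pd j (pd j (u al)) x)).
    apply: isdS => al; exact: isdM (iU al j j) (iL al).
  apply: (etrans (dval (isdM (iA2 j) iF))).
  rewrite /lap /=; ring.
have L3 i : pd i (fun y => A y ^+ 2 *
      \sum_(j < n) \sum_(al < N) pd j (u al) y * pd j (pd i (u al)) y) x
  = A x ^+ 2 * (\sum_(j < n) \sum_(al < N) (pd j (u al) x * pd i (pd j (pd i (u al))) x
        + pd j (pd i (u al)) x * pd i (pd j (u al)) x))
      + (\sum_(j < n) \sum_(al < N) pd j (u al) x * pd j (pd i (u al)) x) * (2 * A x * dA i).
  have iK : is_derive x (delta_mx 0 i)
      (fun y => \sum_(j < n) \sum_(al < N) pd j (u al) y * pd j (pd i (u al)) y)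
      (\sum_(j < n) \sum_(al < N) (pd j (u al) x * pd i (pd j (pd i (u al))) x
        + pd j (pd i (u al)) x * pd i (pd j (u al)) x)).
    exact: (isdS (fun j => isdS (fun al => isdM (iU al j i) (derivableP (d3 al i j i))))).
  apply: (etrans (dval (isdM (iA2 i) iK))).
  rewrite /=. ring.
have EL : \sum_(al < N) (\sum_(i < n) pd i (fun y => A y * pd i (u al) y) x) ^+ 2
    = \sum_(al < N) (\sum_(i < n) (A x * pd i (pd i (u al)) x + pd i (u al) x * dA i)) ^+ 2.
  by apply: eq_bigr => al _; congr (_ ^+ 2); apply: eq_bigr => i _; exact: L1.
have E2 := eq_bigr _ (fun j (_ : true) => L2 j).
have E3 := eq_bigr _ (fun i (_ : true) => L3 i).
rewrite EL E2 E3.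
have Halg := @alg R N n (fun al i => pd i (u al) x) (fun al i j => pd j (pd i (u al)) x)
  (fun al i j k => pd k (pd j (pd i (u al))) x) dA (A x) G (Num.min 1 (1 + 2 * ia)) ia
  Hs Ts A0 C1 Cia hia' hdA.
exact: Halg.
Qed.
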